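(* Let $\mathcal{A}$ be an ARI-algebra of matrices over a countable index set $K$, with class $W$ of $\mathcal{A}$-admissible weights, and let $\mu\in W$. Let $B$ be a matrix over $K$ such that (i) $B^\mu=\operatorname{diag}(\mu)\, B\, \operatorname{diag}(1/\mu)\in\mathcal{A}$, and (ii) $B$ is (bounded and) invertible on $\ell^2_\mu(K)$. Then $B$ is bounded and invertible on $\ell^p_w(K)$ for every $1\le p\le\infty$ and every weight of the form $w=\mu\cdot m$ with $m\in W$; in particular, $B$ is bounded and invertible on every $\ell^p(K)$, $1\le p\le \infty$.
   Context: $K$ is a countable index set. For a strictly positive weight $m=(m_k)_{k\in K}$, $\ell^p_m(K)$ is the space of sequences $c$ with $\|c\|_{\ell^p_m}=\|(m_kc_k)_k\|_{\ell^p}<\infty$. For a sequence $\mu$, $\operatorname{diag}(\mu)$ is the diagonal matrix with entries $\mu_k$, and for a matrix $B$ over $K$ and a positive weight $\mu$ one writes $B^\mu:=\operatorname{diag}(\mu)\,B\,\operatorname{diag}(1/\mu)$. An ARI-algebra is a Banach $*$-algebra $\mathcal{A}$ of matrices over $K$ (with $*$ the matrix adjoint) together with a class $W$ of positive weights on $K$ (called $\mathcal{A}$-admissible weights) such that: (ARI1) every $A\in\mathcal{A}$ is bounded on $\ell^p_m(K)$ for all $p\in[1,\infty]$ and all $m\in W$, the constant weight $1$ belongs to $W$, and $m\in W$ implies $1/m\in W$; (ARI2) $\mathcal{A}$ is inverse-closed in $\mathcal{B}(\ell^2(K))$, i.e. if $A\in\mathcal{A}$ is invertible on $\ell^2(K)$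 then $A^{-1}\in\mathcal{A}$. *)

(* Defs.v *)
From mathcomp Require Import all_boot all_order all_algebra finmap.
From mathcomp Require Import classical_sets boolp reals ereal esum exp.
From mathcomp.real_closed Require Import complex.

Set Implicit Arguments.
Unset Strict Implicit.
Unset Printing Implicit Defensive.
Import Order.TTheory GRing.Theory Num.Theory.
Local Open Scope ring_scope.

Section ARI.
Variables (R : realType) (K : countType).
Local Notation C := R[i].

Definition cabs (z : C) : R := ComplexField.Normc.normc z.
Definition cR (x : R) : C := (x%:C)%C.

Definition cseq := K -> C.
Definition cmatrix := K -> K -> C.
Definition weight := K -> R.

Definition HasSum (f : K -> C) (s : C) : Prop :=
  forall e : R, 0 < e -> exists F0 : {fset K}, forall F : {fset K},
    fsubset F0 F -> cabs ((\sum_(k <- F) f k) - s) < e.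

Definition abs_summable (f : K -> C) : Prop :=
  exists M : R, forall F : {fset K}, \sum_(k <- F) cabs (f k) <= M.

Definition sumK (f : K -> C) : C := xget 0 [set s | HasSum f s].

Definition mxapply (A : cmatrix) (c : cseq) : cseq :=
  fun k => sumK (fun j => A k j * c j).
Definition mxmul (A B : cmatrix) : cmatrix :=
  fun i k => sumK (fun j => A i j * B j k).
Definition mxadj (A : cmatrix) : cmatrix := fun i j => conjc (A j i).
Definition mxadd (A B : cmatrix) : cmatrix := fun i j => A i j + B i j.
Definition mxsub (A B : cmatrix) : cmatrix := fun i j => A i j - B i j.
Definition mxscale (a : C) (A : cmatrix) : cmatrix := fun i j => a * A i j.
Definition mxzero : cmatrix := fun _ _ => 0.

Definition mxconj (mu : weight) (B : cmatrix) : cmatrix :=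
  fun i j => cR (mu i) * B i j * cR ((mu j)^-1).

(* weighted l^p norm, p in [1, +oo] encoded as an extended real *)
Definition lpnorm (p : \bar R) (m : weight) (c : cseq) : \bar R :=
  match p with
  | EFin r => poweR (\esum_(k in [set: K]) (powR (m k * cabs (c k)) r)%:E) r^-1
  | +oo%E => ereal_sup ([set 0%E] `|` [set (m k * cabs (c k))%:E | k in [set: K]])
  | -oo%E => 0%E
  end.

Definition in_lp (p : \bar R) (m : weight) (c : cseq) : Prop :=
  (lpnorm p m c < +oo)%E.

Definition bounded_on (p : \bar R) (m : weight) (A : cmatrix) : Prop :=
  exists M : R, forall c, in_lp p m c ->
    (forall k, abs_summable (fun j => A k j * c j)) /\
    (lpnorm p m (mxapply A c) <= M%:E * lpnorm p m c)%E.

Definition invertible_on (p : \bar R) (m : weight) (A : cmatrix) : Prop :=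
  bounded_on p m A /\
  exists T : cseq -> cseq,
    (forall d, in_lp p m d -> in_lp p m (T d) /\ mxapply A (T d) = d) /\
    (forall c, in_lp p m c -> T (mxapply A c) = c) /\
    exists M : R, forall d, in_lp p m d ->
      (lpnorm p m (T d) <= M%:E * lpnorm p m d)%E.

Record banach_star_mx_algebra (Alg : set cmatrix) (N : cmatrix -> R) : Prop := {
  bsa_zero : Alg mxzero;
  bsa_add : forall A B, Alg A -> Alg B -> Alg (mxadd A B);
  bsa_scale : forall a A, Alg A -> Alg (mxscale a A);
  bsa_mul_def : forall A B, Alg A -> Alg B ->
    forall i k, abs_summable (fun j => A i j * B j k);
  bsa_mul : forall A B, Alg A -> Alg B -> Alg (mxmul A B);
  bsa_mulA : forall A B D, Alg A -> Alg B -> Alg D ->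
    mxmul (mxmul A B) D = mxmul A (mxmul B D);
  bsa_adj : forall A, Alg A -> Alg (mxadj A);
  bsa_norm_ge0 : forall A, Alg A -> 0 <= N A;
  bsa_norm_eq0 : forall A, Alg A -> N A = 0 -> A = mxzero;
  bsa_norm_triangle : forall A B, Alg A -> Alg B -> N (mxadd A B) <= N A + N B;
  bsa_norm_scale : forall a A, Alg A -> N (mxscale a A) = cabs a * N A;
  bsa_norm_submult : forall A B, Alg A -> Alg B -> N (mxmul A B) <= N A * N B;
  bsa_norm_adj : forall A, Alg A -> N (mxadj A) = N A;
  bsa_complete : forall u : nat -> cmatrix, (forall n, Alg (u n)) ->
    (forall e : R, 0 < e -> exists n0 : nat, forall n k : nat,
       (n0 <= n)%N -> (n0 <= k)%N -> N (mxsub (u n) (u k)) < e) ->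
    exists A, Alg A /\ forall e : R, 0 < e -> exists n0 : nat, forall n : nat,
       (n0 <= n)%N -> N (mxsub (u n) A) < e
}.

Record ARI_algebra (Alg : set cmatrix) (N : cmatrix -> R) (W : set weight) : Prop := {
  ari_banach : banach_star_mx_algebra Alg N;
  ari_weights_pos : forall m, W m -> forall k, 0 < m k;
  ari_bounded : forall A, Alg A -> forall (p : \bar R), (1 <= p)%E ->
    forall m, W m -> bounded_on p m A;
  ari_one : W (fun _ => 1);
  ari_inv : forall m, W m -> W (fun k => (m k)^-1);
  ari_inverse_closed : forall A, Alg A -> invertible_on 2%:E (fun _ => 1) A ->
    exists A', Alg A' /\ forall c, in_lp 2%:E (fun _ => 1) c ->
      mxapply A' (mxapply A c) = c /\ mxapply A (mxapply A' c) = c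
}.

End ARI.

(* Main.v *)
Require Import Defs.
From mathcomp Require Import all_boot all_order all_algebra finmap.
From mathcomp Require Import classical_sets boolp reals ereal esum exp.
From mathcomp.real_closed Require Import complex.
From mathcomp Require Import lra ring.
Set Implicit Arguments.
Unset Strict Implicit.
Unset Printing Implicit Defensive.
Import Order.TTheory GRing.Theory Num.Theory.
Local Open Scope ring_scope.


Section Sums.
Variables (R : realType) (K : countType).
Local Notation C := R[i].

Lemma cabs_ge0 (z : C) : 0 <= cabs z.
Proof. by case: z => a b; rewrite /cabs /=; apply: sqrtr_ge0. Qed.

Lemma cabsM (x y : C) : cabs (x * y) = cabs x * cabs y.
Proof. exact: ComplexField.Normc.normcM. Qed.

Lemma cabsE (z : C) : cR (cabs z) = `|z|.
Proof. by case: z => a b; rewrite normc_def. Qed.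

Lemma cabsD (x y : C) : cabs (x + y) <= cabs x + cabs y.
Proof.
have := ler_normD x y; rewrite -!cabsE -rmorphD /=.
by rewrite lecR.
Qed.

Lemma cabs_Re (z : C) : `|complex.Re z| <= cabs z.
Proof.
case: z => a b; rewrite /cabs /= -sqrtr_sqr ler_sqrt; last first.
  by rewrite addr_ge0 // sqr_ge0.
by rewrite lerDl sqr_ge0.
Qed.

Lemma cabs_Im (z : C) : `|complex.Im z| <= cabs z.
Proof.
case: z => a b; rewrite /cabs /= -sqrtr_sqr ler_sqrt; last first.
  by rewrite addr_ge0 // sqr_ge0.
by rewrite lerDr sqr_ge0.
Qed.

Lemma cabs_le_ReIm (z : C) : cabs z <= `|complex.Re z| + `|complex.Im z|.
Proof.
case: z => a b; rewrite /cabs /=.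
have h : 0 <= `|a| + `|b| by rewrite addr_ge0.
rewrite -(ger0_norm h) -sqrtr_sqr ler_sqrt; last by rewrite sqr_ge0.
rewrite sqrrD !real_normK ?num_real //.
have : 0 <= `|a| * `|b| by rewrite mulr_ge0.
move=> ?; rewrite mulr2n; lra.
Qed.

Lemma cabs0 : cabs (0 : C) = 0.
Proof. exact: ComplexField.Normc.normc0. Qed.

Lemma cabs1 : cabs (1 : C) = 1.
Proof. exact: ComplexField.Normc.normc1. Qed.

Lemma cabsR (x : R) : cabs (cR x) = `|x|.
Proof. by rewrite /cabs /cR /= expr0n /= addr0 sqrtr_sqr. Qed.

Lemma cabsN (z : C) : cabs (- z) = cabs z.
Proof. by case: z => a b; rewrite /cabs /= !sqrrN. Qed.

Lemma cabsB (x y : C) : cabs (x - y) = cabs (y - x).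
Proof. by rewrite -cabsN opprB. Qed.

Lemma Re_sum (s : seq K) (f : K -> C) :
  complex.Re (\sum_(k <- s) f k) = \sum_(k <- s) complex.Re (f k).
Proof.
elim: s => [|a s IH]; first by rewrite !big_nil.
by rewrite !big_cons -IH; case: (f a) => ? ?; case: (\sum_(k <- s) f k).
Qed.

Lemma Im_sum (s : seq K) (f : K -> C) :
  complex.Im (\sum_(k <- s) f k) = \sum_(k <- s) complex.Im (f k).
Proof.
elim: s => [|a s IH]; first by rewrite !big_nil.
by rewrite !big_cons -IH; case: (f a) => ? ?; case: (\sum_(k <- s) f k).
Qed.


Definition RHasSum (f : K -> R) (s : R) : Prop :=
  forall e : R, 0 < e -> exists F0 : {fset K}, forall F : {fset K},
    fsubset F0 F -> `|\sum_(k <- F) f k - s| < e.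

Lemma RHasSum_unique f s t : RHasSum f s -> RHasSum f t -> s = t.
Proof.
move=> hs ht; have [//|hne] := eqVneq s t; exfalso.
have he : 0 < `|s - t| / 2 by rewrite divr_gt0 // normr_gt0 subr_eq0.
have [F0 h0] := hs _ he; have [F1 h1] := ht _ he.
have := h0 (F0 `|` F1)%fset (fsubsetUl _ _).
have := h1 (F0 `|` F1)%fset (fsubsetUr _ _).
set S := \sum_(k <- _) f k => a1 a2.
have := ler_normD (s - S) (S - t); rewrite addrA subrK (distrC s S).
lra.
Qed.

Lemma sum_fsubset_le (f : K -> R) (F G : {fset K}) :
  (forall k, 0 <= f k) -> fsubset F G -> \sum_(k <- F) f k <= \sum_(k <- G) f k.
Proof.
move=> f0 sFG.
have -> : \sum_(k <- F) f k = \sum_(k <- F) (if k \in F then f k else 0).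
  by rewrite big_seq_cond [RHS]big_seq_cond; apply: eq_bigr => k /andP[-> _].
rewrite (big_fset_incl _ sFG); last by move=> x _ /negbTE ->.
by apply: ler_sum => k _; case: ifP.
Qed.

Lemma RHasSum_add f g s t : RHasSum f s -> RHasSum g t ->
  RHasSum (fun k => f k + g k) (s + t).
Proof.
move=> hs ht e e0.
have he : 0 < e / 2 by rewrite divr_gt0.
have [F0 h0] := hs _ he; have [F1 h1] := ht _ he.
exists (F0 `|` F1)%fset => F sF.
have sF0 : fsubset F0 F by apply: fsubset_trans sF; apply: fsubsetUl.
have sF1 : fsubset F1 F by apply: fsubset_trans sF; apply: fsubsetUr.
have := h0 _ sF0; have := h1 _ sF1; rewrite big_split /=.
set a := \sum_(k <- F) f k; set b := \sum_(k <- F) g k => a1 a2.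
have := ler_normD (a - s) (b - t).
have -> : a - s + (b - t) = a + b - (s + t) by rewrite opprD addrACA.
lra.
Qed.

Lemma RHasSum_scale c f s : RHasSum f s -> RHasSum (fun k => c * f k) (c * s).
Proof.
move=> hs e e0.
have d0 : 0 < `|c| + 1 by rewrite ltr_wpDl.
have he : 0 < e / (`|c| + 1) by rewrite divr_gt0.
have [F0 h0] := hs _ he; exists F0 => F sF.
have := h0 _ sF; rewrite -mulr_sumr -mulrBr normrM => h.
have ee : e / (`|c| + 1) * (`|c| + 1) = e by rewrite divfK // gt_eqF.
have nc := normr_ge0 c.
have nx := normr_ge0 (\sum_(k <- F) f k - s).
nra.
Qed.

Lemma RHasSum_sub f g s t : RHasSum f s -> RHasSum g t ->
  RHasSum (fun k => f k - g k) (s - t).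
Proof.
move=> hs ht; have := RHasSum_add hs (RHasSum_scale (-1) ht).
by rewrite mulN1r; congr RHasSum; apply: funext => k; rewrite mulN1r.
Qed.

Lemma RHasSum_le f s M : RHasSum f s ->
  (forall F : {fset K}, \sum_(k <- F) f k <= M) -> s <= M.
Proof.
move=> hs hM; rewrite leNgt; apply/negP => sM.
have sM' : 0 < s - M by rewrite subr_gt0.
have [F0 h0] := hs _ sM'.
have := h0 F0 (fsubset_refl _); have := hM F0.
set a := \sum_(k <- F0) f k => h1 h2.
have := ler_norm (s - a); rewrite -normrN opprB; lra.
Qed.

Lemma RHasSum_ge f s (F : {fset K}) : (forall k, 0 <= f k) -> RHasSum f s ->
  \sum_(k <- F) f k <= s.
Proof.
move=> f0 hs; rewrite leNgt; apply/negP => sM.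
have sM' : 0 < \sum_(k <- F) f k - s by rewrite subr_gt0.
have [F0 h0] := hs _ sM'.
have := h0 (F0 `|` F)%fset (fsubsetUl _ _).
have := sum_fsubset_le f0 (fsubsetUr F0 F).
set a := \sum_(k <- (F0 `|` F)%fset) f k => h1 h2.
have := ler_norm (a - s); lra.
Qed.

Lemma RHasSum_ge0 f s : (forall k, 0 <= f k) -> RHasSum f s -> 0 <= s.
Proof. by move=> f0 hs; have := RHasSum_ge fset0 f0 hs; rewrite big_nil. Qed.

Lemma RHasSum_nonneg_ex f M : (forall k, 0 <= f k) ->
  (forall F : {fset K}, \sum_(k <- F) f k <= M) -> exists s, RHasSum f s.
Proof.
move=> f0 hM.
pose E : set R := fun x => exists F : {fset K}, x = \sum_(k <- F) f k.
have hE : has_sup E.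
  split; first by exists 0, fset0; rewrite big_nil.
  by exists M => x [F ->].
exists (sup E) => e e0.
have [x [F0 ->] hx] := sup_adherent e0 hE.
exists F0 => F sF.
have h1 := sum_fsubset_le f0 sF.
have h2 : \sum_(k <- F) f k <= sup E by apply: sup_upper_bound => //; exists F.
rewrite ler0_norm ?subr_le0 //; lra.
Qed.

Lemma RHasSum_abs_ex f M :
  (forall F : {fset K}, \sum_(k <- F) `|f k| <= M) -> exists s, RHasSum f s.
Proof.
move=> hM.
have [sp hp] : exists s, RHasSum (fun k => `|f k| + f k) s.
  apply: (@RHasSum_nonneg_ex _ (M + M)).
    by move=> k; have := ler_norm (- f k); rewrite normrN; lra.
  move=> F; rewrite big_split /=; apply: lerD => //.
  by rewrite (le_trans _ (hM F)) // ler_sum // => k _; apply: ler_norm.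
have [sn hn] : exists s, RHasSum (fun k => `|f k|) s.
  by apply: (@RHasSum_nonneg_ex _ M).
exists (sp - sn); have := RHasSum_sub hp hn.
by congr RHasSum; apply: funext => k; rewrite addrAC subrr add0r.
Qed.

Lemma RHasSum_zero : RHasSum (fun _ => 0) 0.
Proof. by move=> e e0; exists fset0 => F _; rewrite big1 // subr0 normr0. Qed.

Lemma RHasSum_sumF (b : K -> K -> R) (r : K -> R) (s : seq K) :
  (forall j, RHasSum (b j) (r j)) ->
  RHasSum (fun l => \sum_(j <- s) b j l) (\sum_(j <- s) r j).
Proof.
move=> hb; elim: s => [|a s IH].
  rewrite big_nil; have := RHasSum_zero; congr RHasSum.
  by apply: funext => l; rewrite big_nil.
rewrite big_cons; have := RHasSum_add (hb a) IH; congr RHasSum.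
by apply: funext => l; rewrite big_cons.
Qed.


Lemma fub_le (b : K -> K -> R) (r c : K -> R) S S' :
  (forall j l, 0 <= b j l) ->
  (forall j, RHasSum (b j) (r j)) -> (forall l, RHasSum (fun j => b j l) (c l)) ->
  RHasSum r S -> RHasSum c S' -> S <= S'.
Proof.
move=> b0 hr hc hS hS'.
have c0 : forall l, 0 <= c l.
  by move=> l; apply: (RHasSum_ge0 _ (hc l)) => j; apply: b0.
apply: (RHasSum_le hS) => F.
apply: (RHasSum_le (RHasSum_sumF F hr)) => G.
apply: (@le_trans _ _ (\sum_(l <- G) c l)); last exact: RHasSum_ge c0 hS'.
apply: ler_sum => l _; apply: RHasSum_ge (hc l) => j; exact: b0.
Qed.

Lemma RFN_ex (b : K -> K -> R) M :
  (forall j l, 0 <= b j l) ->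
  (forall F G : {fset K}, \sum_(j <- F) \sum_(l <- G) b j l <= M) ->
  exists r c : K -> R, exists S,
    (forall j, RHasSum (b j) (r j)) /\ (forall l, RHasSum (fun j => b j l) (c l)) /\
    RHasSum r S /\ RHasSum c S.
Proof.
move=> b0 hM.
have /choice [r hr] : forall j, exists s, RHasSum (b j) s.
  move=> j; apply: (RHasSum_nonneg_ex (M := M)) => // G.
  by have := hM [fset j]%fset G; rewrite big_seq_fset1.
have /choice [c hc] : forall l, exists s, RHasSum (fun j => b j l) s.
  move=> l; apply: (RHasSum_nonneg_ex (M := M)) => // F.
  have := hM F [fset l]%fset.
  by under eq_bigr do rewrite big_seq_fset1.
have r0 : forall j, 0 <= r j by move=> j; exact: RHasSum_ge0 (b0 j) (hr j).
have c0 : forall l, 0 <= c l.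
  by move=> l; apply: (RHasSum_ge0 _ (hc l)) => j; apply: b0.
have [S hS] : exists S, RHasSum r S.
  apply: (RHasSum_nonneg_ex (M := M)) => // F.
  apply: (RHasSum_le (RHasSum_sumF F hr)) => G.
  by rewrite exchange_big.
have [S' hS'] : exists S, RHasSum c S.
  apply: (RHasSum_nonneg_ex (M := M)) => // G.
  have hc' : forall l, RHasSum (fun j => b j l) (c l) := hc.
  apply: (RHasSum_le (RHasSum_sumF (b := fun l j => b j l) G hc)) => F.
  exact: hM.
suff SS : S = S'.
  exists r, c, S; split; first done. split; first done. split; first done. by rewrite SS.
apply: le_anti; rewrite (fub_le b0 hr hc hS hS') /=.
by apply: (fub_le (b := fun l j => b j l) (r := c) (c := r)) => //.
Qed.

Lemma RF_ex (b : K -> K -> R) M :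
  (forall F G : {fset K}, \sum_(j <- F) \sum_(l <- G) `|b j l| <= M) ->
  exists r c : K -> R, exists S,
    (forall j, RHasSum (b j) (r j)) /\ (forall l, RHasSum (fun j => b j l) (c l)) /\
    RHasSum r S /\ RHasSum c S.
Proof.
move=> hM.
have bp0 : forall j l, 0 <= `|b j l| + b j l.
  by move=> j l; have := ler_norm (- b j l); rewrite normrN; lra.
have [rp [cp [Sp [hrp [hcp [hSp hSp']]]]]] :
  exists r c : K -> R, exists S,
    (forall j, RHasSum (fun l => `|b j l| + b j l) (r j)) /\
    (forall l, RHasSum (fun j => `|b j l| + b j l) (c l)) /\
    RHasSum r S /\ RHasSum c S.
  apply: (RFN_ex (M := M + M)) => // F G.
  have h : \sum_(j <- F) \sum_(l <- G) (`|b j l| + b j l) <=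
     \sum_(j <- F) \sum_(l <- G) `|b j l| + \sum_(j <- F) \sum_(l <- G) `|b j l|.
    rewrite -big_split /=; apply: ler_sum => j _; rewrite -big_split /=.
    by apply: ler_sum => l _; rewrite lerD // ler_norm.
  have := hM F G; lra.
have [rn [cn [Sn [hrn [hcn [hSn hSn']]]]]] :
  exists r c : K -> R, exists S,
    (forall j, RHasSum (fun l => `|b j l|) (r j)) /\
    (forall l, RHasSum (fun j => `|b j l|) (c l)) /\
    RHasSum r S /\ RHasSum c S.
  by apply: (RFN_ex (M := M)) => // j l.
exists (fun j => rp j - rn j), (fun l => cp l - cn l), (Sp - Sn).
split; [|split; [|split]].
- move=> j; have := RHasSum_sub (hrp j) (hrn j); congr RHasSum.
  by apply: funext => l; rewrite addrAC subrr add0r.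
- move=> l; have := RHasSum_sub (hcp l) (hcn l); congr RHasSum.
  by apply: funext => j; rewrite addrAC subrr add0r.
- exact: RHasSum_sub hSp hSn.
- exact: RHasSum_sub hSp' hSn'.
Qed.


Lemma ReB (x y : C) : complex.Re (x - y) = complex.Re x - complex.Re y.
Proof. by case: x; case: y. Qed.
Lemma ImB (x y : C) : complex.Im (x - y) = complex.Im x - complex.Im y.
Proof. by case: x; case: y. Qed.

Lemma HasSum_iff (f : K -> C) s : HasSum f s <->
  RHasSum (fun k => complex.Re (f k)) (complex.Re s) /\
  RHasSum (fun k => complex.Im (f k)) (complex.Im s).
Proof.
split.
  move=> hs; split=> e e0; have [F0 h0] := hs e e0; exists F0 => F sF;
  have := h0 F sF.
    by rewrite -Re_sum -ReB; apply: le_lt_trans; apply: cabs_Re.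
  by rewrite -Im_sum -ImB; apply: le_lt_trans; apply: cabs_Im.
move=> [hR hI] e e0.
have he : 0 < e / 2 by rewrite divr_gt0.
have [F0 h0] := hR _ he; have [F1 h1] := hI _ he.
exists (F0 `|` F1)%fset => F sF.
have sF0 : fsubset F0 F by apply: fsubset_trans sF; apply: fsubsetUl.
have sF1 : fsubset F1 F by apply: fsubset_trans sF; apply: fsubsetUr.
have := h0 _ sF0; have := h1 _ sF1.
rewrite -Re_sum -Im_sum -ReB -ImB => a1 a2.
have := cabs_le_ReIm (\sum_(k <- F) f k - s); lra.
Qed.

Lemma HasSum_unique (f : K -> C) s t : HasSum f s -> HasSum f t -> s = t.
Proof.
move=> /HasSum_iff[hs1 hs2] /HasSum_iff[ht1 ht2].
case: s t hs1 hs2 ht1 ht2 => a b [c d] /= h1 h2 h3 h4.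
by rewrite (RHasSum_unique h1 h3) (RHasSum_unique h2 h4).
Qed.

Lemma sumK_eq (f : K -> C) s : HasSum f s -> sumK f = s.
Proof.
move=> hs; rewrite /sumK; apply: xget_unique => // t ht.
exact: HasSum_unique ht hs.
Qed.

Lemma HasSum_scale (a : C) (f : K -> C) s :
  HasSum f s -> HasSum (fun k => a * f k) (a * s).
Proof.
move=> hs e e0.
have ca := cabs_ge0 a.
have d0 : 0 < cabs a + 1 by lra.
have he : 0 < e / (cabs a + 1) by rewrite divr_gt0.
have [F0 h0] := hs _ he; exists F0 => F sF.
have := h0 _ sF; rewrite -mulr_sumr -mulrBr cabsM => h.
have ee : e / (cabs a + 1) * (cabs a + 1) = e by rewrite divfK // gt_eqF.
have nx := cabs_ge0 (\sum_(k <- F) f k - s).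
nra.
Qed.

Lemma HasSum_fin (f : K -> C) (F : {fset K}) :
  (forall j, j \notin F -> f j = 0) -> HasSum f (\sum_(j <- F) f j).
Proof.
move=> hf e e0; exists F => G sG.
rewrite (big_fset_incl _ sG) ?subrr ?cabs0 // => x _ /hf.
done.
Qed.

Lemma sumK_fin (f : K -> C) (F : {fset K}) :
  (forall j, j \notin F -> f j = 0) -> sumK f = \sum_(j <- F) f j.
Proof. by move=> hf; apply: sumK_eq; apply: HasSum_fin. Qed.

Lemma sumKZ (a : C) (f : K -> C) : sumK (fun j => a * f j) = a * sumK f.
Proof.
case: (eqVneq a 0) => [->|a0].
  rewrite mul0r (@sumK_fin _ fset0) ?big_nil // => j _; exact: mul0r.
case: (pselect (exists s, HasSum f s)) => [[s hs]|ns].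
  by rewrite (sumK_eq hs) (sumK_eq (HasSum_scale a hs)).
have n1 : forall t, ~ HasSum f t by move=> t ht; apply: ns; exists t.
have n2 : forall t, ~ HasSum (fun j => a * f j) t.
  move=> t ht; apply: (n1 (a^-1 * t)).
  have := HasSum_scale a^-1 ht; congr HasSum; apply: funext => k /=.
  by rewrite mulrA mulVf // mul1r.
by rewrite /sumK !xgetPN ?mulr0.
Qed.

Lemma sumKZr (a : C) (f : K -> C) : sumK (fun j => f j * a) = sumK f * a.
Proof.
rewrite mulrC -sumKZ; congr sumK; apply: funext => j; exact: mulrC.
Qed.

Lemma abs_summable_ex (f : K -> C) : abs_summable f -> exists s, HasSum f s.
Proof.
move=> [M hM].
have [sR hR] : exists s, RHasSum (fun k => complex.Re (f k)) s.
  apply: (RHasSum_abs_ex (M := M)) => F; apply: le_trans (hM F).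
  by apply: ler_sum => k _; apply: cabs_Re.
have [sI hI] : exists s, RHasSum (fun k => complex.Im (f k)) s.
  apply: (RHasSum_abs_ex (M := M)) => F; apply: le_trans (hM F).
  by apply: ler_sum => k _; apply: cabs_Im.
by exists (sR +i* sI)%C; apply/HasSum_iff.
Qed.

Lemma CF_ex (a : K -> K -> C) M :
  (forall F G : {fset K}, \sum_(j <- F) \sum_(l <- G) cabs (a j l) <= M) ->
  exists S, HasSum (fun j => sumK (a j)) S /\
            HasSum (fun l => sumK (fun j => a j l)) S.
Proof.
move=> hM.
have hR : forall F G : {fset K},
    \sum_(j <- F) \sum_(l <- G) `|complex.Re (a j l)| <= M.
  move=> F G; apply: le_trans (hM F G); apply: ler_sum => j _.
  by apply: ler_sum => l _; apply: cabs_Re.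
have hI : forall F G : {fset K},
    \sum_(j <- F) \sum_(l <- G) `|complex.Im (a j l)| <= M.
  move=> F G; apply: le_trans (hM F G); apply: ler_sum => j _.
  by apply: ler_sum => l _; apply: cabs_Im.
have [rR [cRe [SR [hrR [hcR [hSR hSR']]]]]] := RF_ex hR.
have [rI [cIm [SI [hrI [hcI [hSI hSI']]]]]] := RF_ex hI.
have e1 : (fun j => sumK (a j)) = (fun j => (rR j +i* rI j)%C).
  by apply: funext => j; apply: sumK_eq; apply/HasSum_iff.
have e2 : (fun l => sumK (fun j => a j l)) = (fun l => (cRe l +i* cIm l)%C).
  by apply: funext => l; apply: sumK_eq; apply/HasSum_iff.
exists (SR +i* SI)%C; rewrite e1 e2; split; apply/HasSum_iff; split => //.
Qed.

End Sums.


Section Lp.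
Variables (R : realType) (K : countType).
Local Notation C := R[i].

Lemma lpnorm_eq p (m m' : weight R K) (c c' : cseq R K) :
  (forall k, m k * cabs (c k) = m' k * cabs (c' k)) ->
  lpnorm p m c = lpnorm p m' c'.
Proof.
move=> h; have E : (fun k => m k * cabs (c k)) = (fun k => m' k * cabs (c' k)).
  exact: funext.
case: p => [r| |] //=.
  by congr (poweR _ _); apply: eq_esum => k _; rewrite h.
congr (ereal_sup (_ `|` _)); apply/seteqP; split => x [k _ <-]; exists k => //; by rewrite h.
Qed.

Lemma lpnorm_ge0 p (m : weight R K) (c : cseq R K) : (0 <= lpnorm p m c)%E.
Proof.
case: p => [r| |] //=; first exact: poweR_ge0.
by apply: ereal_sup_ubound; left.
Qed.

Lemma esum_ge1 (a : K -> \bar R) k : (forall i, (0 <= a i)%E) ->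
  (a k <= \esum_(i in [set: K]) a i)%E.
Proof.
move=> a0; rewrite (esumID [set k]) // setTI esum_set1 //.
by rewrite leeDl // esum_ge0.
Qed.

Lemma lp_sup p (m : weight R K) (c : cseq R K) : (1 <= p)%E ->
  (forall k, 0 < m k) -> in_lp p m c ->
  exists C0, 0 <= C0 /\ forall k, m k * cabs (c k) <= C0.
Proof.
move=> p1 m0 hc; have L0 := lpnorm_ge0 p m c.
have Lf : lpnorm p m c \is a fin_num by rewrite ge0_fin_numE.
exists (fine (lpnorm p m c)); split; first by rewrite fine_ge0.
move=> k; rewrite -lee_fin fineK //.
have x0 : 0 <= m k * cabs (c k) by rewrite mulr_ge0 ?cabs_ge0 // ltW.
case: p p1 hc L0 Lf => [r| |] //= p1 hc L0 Lf.
  have r1 : 1 <= r by rewrite -lee_fin.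
  have r0 : 0 < r by lra.
  have h := @esum_ge1 (fun k => ((m k * cabs (c k)) `^ r)%:E) k.
  have := h (fun i => powR_ge0 _ _) => /= {}h.
  have := @gt0_ler_poweR _ r^-1; rewrite invr_ge0 ltW // => /(_ isT) hm.
  have e1 : ((m k * cabs (c k)) `^ r)%:E \in `[0%E, +oo%E].
    by rewrite in_itv /= leey andbT lee_fin powR_ge0.
  have e2 : \esum_(i in [set: K]) ((m i * cabs (c i)) `^ r)%:E \in `[0%E, +oo%E].
    by rewrite in_itv /= leey andbT esum_ge0 // => i _; rewrite lee_fin powR_ge0.
  have := hm _ _ e1 e2 h.
  by rewrite poweR_EFin -powRrM mulfV ?gt_eqF // powRr1.
apply: ereal_sup_ubound; right; by exists k.
Qed.


Lemma cR_mul (x y : R) : cR (x * y) = cR x * cR y.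
Proof. by rewrite /cR rmorphM. Qed.
Lemma cRV (x : R) : cR x^-1 = (cR x)^-1.
Proof. by rewrite /cR fmorphV. Qed.
Lemma cR_sum (s : seq K) (f : K -> R) :
  cR (\sum_(k <- s) f k) = \sum_(k <- s) cR (f k).
Proof. by rewrite /cR rmorph_sum. Qed.
Lemma cR_neq0 (x : R) : x != 0 -> cR x != 0.
Proof.
move=> x0; apply/negP => /eqP h; move: x0; have := congr1 (@complex.Re R) h.
by rewrite /cR /= => ->; rewrite eqxx.
Qed.
Lemma cabsV (z : C) : cabs z^-1 = (cabs z)^-1.
Proof. exact: ComplexField.Normc.normcV. Qed.

Lemma unit_lp2 (l : K) : in_lp 2%:E (fun _ => 1) (fun i => (i == l)%:R : C).
Proof.
rewrite /in_lp /=; apply: poweR_lty.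
rewrite (esumID [set l]); last by move=> i _; rewrite lee_fin powR_ge0.
rewrite setTI esum_set1 ?lee_fin ?powR_ge0 // esum1 ?adde0 ?ltry // => i [_ /=].
by move/eqP/negbTE => ->; rewrite cabs0 mulr0 powR0.
Qed.

Lemma mxapply_unit (M : cmatrix R K) (l : K) :
  mxapply M (fun i => (i == l)%:R) = fun j => M j l.
Proof.
apply: funext => j; rewrite /mxapply (@sumK_fin _ _ _ [fset l]%fset).
  by rewrite big_seq_fset1 eqxx mulr1.
by move=> i; rewrite inE => /negbTE ->; rewrite mulr0.
Qed.

Definition wmul (w : weight R K) (c : cseq R K) : cseq R K :=
  fun k => cR (w k) * c k.

Lemma wmulK (mu : weight R K) (x : cseq R K) : (forall k, 0 < mu k) ->
  wmul (fun k => (mu k)^-1) (wmul mu x) = x.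
Proof.
move=> m0; apply: funext => k; rewrite /wmul cRV mulrA mulVf ?mul1r //.
by apply: cR_neq0; rewrite gt_eqF.
Qed.

Lemma wmulKV (mu : weight R K) (x : cseq R K) : (forall k, 0 < mu k) ->
  wmul mu (wmul (fun k => (mu k)^-1) x) = x.
Proof.
move=> m0; apply: funext => k; rewrite /wmul cRV mulrA mulfV ?mul1r //.
by apply: cR_neq0; rewrite gt_eqF.
Qed.

Lemma mxapply_conj (mu : weight R K) (B : cmatrix R K) (x : cseq R K) :
  (forall k, 0 < mu k) ->
  mxapply (mxconj mu B) (wmul mu x) = wmul mu (mxapply B x).
Proof.
move=> m0; apply: funext => k; rewrite /mxapply /wmul /mxconj -sumKZ.
congr sumK; apply: funext => j.
have h : cR (mu j) != 0 by apply: cR_neq0; rewrite gt_eqF.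
rewrite cRV; field.
exact: h.
Qed.

Lemma lpnorm_wmul p (m mu : weight R K) (x : cseq R K) : (forall k, 0 < mu k) ->
  lpnorm p m (wmul mu x) = lpnorm p (fun k => mu k * m k) x.
Proof.
move=> m0; apply: lpnorm_eq => k.
by rewrite /wmul cabsM cabsR gtr0_norm // mulrA [m k * _]mulrC.
Qed.

Lemma abs_summable_scale (a : C) (f : K -> C) :
  abs_summable f -> abs_summable (fun j => a * f j).
Proof.
move=> [M hM]; exists (cabs a * M) => F.
under eq_bigr do rewrite cabsM.
by rewrite -mulr_sumr ler_wpM2l ?cabs_ge0.
Qed.


Lemma RB (A : cmatrix R K) (m : weight R K) : (forall k, 0 < m k) ->
  bounded_on +oo%E m A -> exists M, 0 <= M /\
  forall k (F : {fset K}), m k * \sum_(j <- F) cabs (A k j) / m j <= M.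
Proof.
move=> m0 [M0 hM0]; exists `|M0|; split => // k F.
pose u (z : C) := z^-1 * cR (cabs z).
have hu : forall z, z * u z = cR (cabs z).
  move=> z; rewrite /u; case: (eqVneq z 0) => [->|z0].
    by rewrite mul0r cabs0 /cR.
  by rewrite mulrA mulfV ?mul1r.
have cu : forall z, cabs (u z) <= 1.
  move=> z; rewrite /u cabsM cabsV cabsR ger0_norm ?cabs_ge0 //.
  case: (eqVneq (cabs z) 0) => [->|z0]; first by rewrite mulr0.
  by rewrite mulVf.
pose c j : C := if j \in F then u (A k j) * cR (m j)^-1 else 0.
have hc : forall j, m j * cabs (c j) <= 1.
  move=> j; rewrite /c; case: ifP => _; last by rewrite cabs0 mulr0.
  rewrite cabsM cabsR ger0_norm; last by rewrite invr_ge0 ltW.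
  by rewrite mulrCA mulfV ?gt_eqF // mulr1.
have Lc : (lpnorm +oo%E m c <= 1)%E.
  rewrite /lpnorm; apply: ge_ereal_sup => x [->|[j _ <-]]; first by [].
  by rewrite lee_fin.
have inc : in_lp +oo%E m c by apply: le_lt_trans Lc _; apply: ltry.
have [_ hb] := hM0 c inc.
have S0 : 0 <= \sum_(j <- F) cabs (A k j) / m j.
  by apply: sumr_ge0 => j _; rewrite divr_ge0 ?cabs_ge0 // ltW.
have Ac : mxapply A c k = cR (\sum_(j <- F) cabs (A k j) / m j).
  rewrite /mxapply (@sumK_fin _ _ _ F); last first.
    by move=> j jF; rewrite /c (negbTE jF) mulr0.
  rewrite cR_sum big_seq [RHS]big_seq; apply: eq_bigr => j jF.
  by rewrite /c jF mulrA hu cR_mul cRV.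
have h1 : ((m k * cabs (mxapply A c k))%:E <= lpnorm +oo%E m (mxapply A c))%E.
  by apply: ereal_sup_ubound; right; exists k.
have L0 := lpnorm_ge0 +oo%E m c.
have Lf : lpnorm +oo%E m c \is a fin_num.
  by rewrite ge0_fin_numE //; apply: le_lt_trans Lc _; apply: ltry.
move: hb L0 Lc h1; rewrite -(fineK Lf) Ac cabsR ger0_norm //.
set l := fine _ => hb L0 Lc h1.
have := le_trans h1 hb; rewrite -EFinM !lee_fin in L0 Lc * => h.
have := ler_norm M0; have := normr_ge0 M0.
have mk := m0 k.
nra.
Qed.


Lemma div_bound (y z w : R) : 0 < w -> w * y <= z -> y <= z / w.
Proof. by move=> w0 h; rewrite ler_pdivlMr // mulrC. Qed.

Lemma key (A B : cmatrix R K) (m : weight R K) (x : cseq R K) :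
  (forall k, 0 < m k) -> bounded_on +oo%E m A -> bounded_on +oo%E m B ->
  (forall k l, mxmul A B k l = (k == l)%:R) ->
  (exists C0, 0 <= C0 /\ forall l, m l * cabs (x l) <= C0) ->
  mxapply A (mxapply B x) = x.
Proof.
move=> m0 bA bB AB [C0 [C00 hx]].
have [MA [MA0 hA]] := RB m0 bA; have [MB [MB0 hB]] := RB m0 bB.
apply: funext => k.
pose a j l := A k j * (B j l * x l).
have hM : forall F G : {fset K},
    \sum_(j <- F) \sum_(l <- G) cabs (a j l) <= C0 * MB * (MA / m k).
  move=> F G.
  have h1 : forall j, \sum_(l <- G) cabs (a j l) <=
      cabs (A k j) / m j * (C0 * MB).
    move=> j.
    have -> : \sum_(l <- G) cabs (a j l) =
        cabs (A k j) * \sum_(l <- G) cabs (B j l) * cabs (x l).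
      by rewrite mulr_sumr; apply: eq_bigr => l _; rewrite /a !cabsM.
    have h2 : \sum_(l <- G) cabs (B j l) * cabs (x l) <=
        C0 * \sum_(l <- G) cabs (B j l) / m l.
      rewrite mulr_sumr; apply: ler_sum => l _.
      rewrite mulrCA ler_wpM2l ?cabs_ge0 //.
      by apply: div_bound => //; apply: hx.
    have h3 : \sum_(l <- G) cabs (B j l) / m l <= MB / m j.
      by apply: div_bound => //; apply: hB.
    have hAk := cabs_ge0 (A k j); have mj := m0 j.
    have S0 : 0 <= \sum_(l <- G) cabs (B j l) / m l.
      by apply: sumr_ge0 => l _; rewrite divr_ge0 ?cabs_ge0 // ltW.
    have -> : cabs (A k j) / m j * (C0 * MB) = cabs (A k j) * (C0 * (MB / m j)).
      by ring.
    rewrite ler_wpM2l //; apply: le_trans h2 _; rewrite ler_wpM2l //.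
  apply: le_trans (ler_sum _ (fun j _ => h1 j)) _.
  rewrite -mulr_suml mulrC ler_wpM2l ?mulr_ge0 //.
  by apply: div_bound => //; apply: hA.
have [S [hS1 hS2]] := CF_ex hM.
have -> : mxapply A (mxapply B x) k = S.
  rewrite /mxapply -(sumK_eq hS1); congr sumK; apply: funext => j.
  by rewrite -sumKZ.
rewrite -(sumK_eq hS2).
have -> : (fun l => sumK (fun j => a j l)) = (fun l => (k == l)%:R * x l).
  apply: funext => l; rewrite -AB /mxmul -sumKZr; congr sumK.
  by apply: funext => j; rewrite /a mulrA.
rewrite (@sumK_fin _ _ _ [fset k]%fset) ?big_seq_fset1 ?eqxx ?mul1r //.
by move=> l; rewrite inE eq_sym => /negbTE ->; rewrite mul0r.
Qed.

End Lp.


Section Main.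
Variables (R : realType) (K : countType).
Local Notation C := R[i].

Lemma bounded_lp p (m : weight R K) (x y : cseq R K) M :
  (lpnorm p m y <= M%:E * lpnorm p m x)%E -> in_lp p m x -> in_lp p m y.
Proof.
move=> h hx; rewrite /in_lp; apply: le_lt_trans h _.
have Lf : lpnorm p m x \is a fin_num by rewrite ge0_fin_numE // lpnorm_ge0.
by rewrite -(fineK Lf) -EFinM ltry.
Qed.

Lemma lpnorm_wmulV p (m mu : weight R K) (d : cseq R K) : (forall k, 0 < mu k) ->
  lpnorm p (fun k => mu k * m k) (wmul (fun k => (mu k)^-1) d) = lpnorm p m d.
Proof. by move=> m0; rewrite -lpnorm_wmul // wmulKV. Qed.

Lemma wmul_inj (mu : weight R K) (x y : cseq R K) : (forall k, 0 < mu k) ->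
  wmul mu x = wmul mu y -> x = y.
Proof.
by move=> m0 h; rewrite -(wmulK x m0) -(wmulK y m0) h.
Qed.

Lemma inv_transfer p (m mu : weight R K) (B Bm A' : cmatrix R K) :
  (forall k, 0 < mu k) -> Bm = mxconj mu B ->
  bounded_on p m Bm -> bounded_on p m A' ->
  (forall y, in_lp p m y -> mxapply A' (mxapply Bm y) = y) ->
  (forall y, in_lp p m y -> mxapply Bm (mxapply A' y) = y) ->
  invertible_on p (fun k => mu k * m k) B.
Proof.
move=> mu0 eBm [M hM] [MA hMA] k1 k2.
have conv1 : forall c, lpnorm p m (wmul mu c) = lpnorm p (fun k => mu k * m k) c.
  by move=> c; rewrite lpnorm_wmul.
have hBm : forall c, mxapply Bm (wmul mu c) = wmul mu (mxapply B c).
  by move=> c; rewrite eBm mxapply_conj.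
split.
  exists M => c hc.
  have hy : in_lp p m (wmul mu c) by rewrite /in_lp conv1.
  have [hs hb] := hM _ hy; split.
    move=> k; have := abs_summable_scale (cR (mu k))^-1 (hs k).
    congr abs_summable; apply: funext => j.
    have h : cR (mu k) != 0 by apply: cR_neq0; rewrite gt_eqF.
    rewrite eBm /mxconj /wmul cRV.
    have h' : cR (mu j) != 0 by apply: cR_neq0; rewrite gt_eqF.
    by field; apply/andP; split.
  by rewrite -conv1 -hBm -conv1.
pose mui := fun k => (mu k)^-1.
exists (fun d => wmul mui (mxapply A' (wmul mu d))).
split; [|split].
- move=> d hd.
  have hy : in_lp p m (wmul mu d) by rewrite /in_lp conv1.
  have [_ hb] := hMA _ hy.
  split.
    by rewrite /in_lp lpnorm_wmulV //; apply: bounded_lp hb hy.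
  apply: (wmul_inj mu0); rewrite -hBm wmulKV //; exact: k2.
- move=> c hc.
  have hy : in_lp p m (wmul mu c) by rewrite /in_lp conv1.
  by rewrite -hBm k1 // wmulK.
- exists MA => d hd.
  have hy : in_lp p m (wmul mu d) by rewrite /in_lp conv1.
  have [_ hb] := hMA _ hy.
  by rewrite lpnorm_wmulV // -conv1.
Qed.

End Main.

Unset Implicit Arguments.
Set Strict Implicit.

Theorem mainTheorem1 (R : realType) (K : countType)
    (Alg : set (cmatrix R K)) (N : cmatrix R K -> R) (W : set (weight R K))
    (mu : weight R K) (B : cmatrix R K) :
  ARI_algebra Alg N W -> W mu ->
  Alg (mxconj mu B) ->
  invertible_on 2%:E mu B ->
  (forall (p : \bar R) (m : weight R K), (1 <= p)%E -> W m ->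
     invertible_on p (fun k => mu k * m k) B) /\
  (forall p : \bar R, (1 <= p)%E -> invertible_on p (fun _ => 1) B).
Proof.
move=> hA Wmu AlgBm [_ [T [hT1 [hT2 [MT hMT]]]]].
have mu0 := ari_weights_pos hA Wmu.
have W1 := ari_one hA.
set Bm := mxconj mu B in AlgBm *.
pose mui := fun k => (mu k)^-1.
have l1 : forall c, lpnorm 2%:E (fun _ => 1) (wmul mu c) = lpnorm 2%:E mu c.
  move=> c; rewrite lpnorm_wmul //; congr lpnorm; apply: funext => k.
  by rewrite mulr1.
have l2 : forall d, lpnorm 2%:E mu (wmul mui d) = lpnorm 2%:E (fun _ => 1) d.
  by move=> d; rewrite -l1 wmulKV.
have hBm : forall c, mxapply Bm (wmul mu c) = wmul mu (mxapply B c).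
  by move=> c; rewrite mxapply_conj.
have inv1 : invertible_on 2%:E (fun _ => 1) Bm.
  split; first by apply: (ari_bounded hA AlgBm) => //; rewrite lee_fin ler1n.
  exists (fun d => wmul mu (T (wmul mui d))); split; [|split].
  - move=> d hd.
    have hy : in_lp 2%:E mu (wmul mui d) by rewrite /in_lp l2.
    have [h1 h2] := hT1 _ hy.
    by split; [rewrite /in_lp l1 | rewrite hBm h2 wmulKV].
  - move=> c hc.
    have hy : in_lp 2%:E mu (wmul mui c) by rewrite /in_lp l2.
    by rewrite -{1}(wmulKV c mu0) hBm wmulK // hT2 // wmulKV.
  - exists MT => d hd.
    have hy : in_lp 2%:E mu (wmul mui d) by rewrite /in_lp l2.
    by rewrite l1 -l2; apply: hMT.
have [A' [AlgA' hA']] := ari_inverse_closed hA AlgBm inv1.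
have AB : forall k l, mxmul A' Bm k l = (k == l)%:R.
  move=> k l; have [h _] := hA' _ (@unit_lp2 R K l).
  by have := congr1 (fun f => f k) h; rewrite mxapply_unit.
have BA : forall k l, mxmul Bm A' k l = (k == l)%:R.
  move=> k l; have [_ h] := hA' _ (@unit_lp2 R K l).
  by have := congr1 (fun f => f k) h; rewrite mxapply_unit.
have part1 : forall (p : \bar R) (m : weight R K), (1 <= p)%E -> W m ->
    invertible_on p (fun k => mu k * m k) B.
  move=> p m p1 Wm.
  have m0 := ari_weights_pos hA Wm.
  have bBI := ari_bounded hA AlgBm (leey 1%E) Wm.
  have bAI := ari_bounded hA AlgA' (leey 1%E) Wm.
  apply: (inv_transfer (Bm := Bm) (A' := A')) => //.
  - exact (ari_bounded hA AlgBm p1 Wm).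
  - exact (ari_bounded hA AlgA' p1 Wm).
  - by move=> y hy; apply: key m0 bAI bBI AB (lp_sup p1 m0 hy).
  - by move=> y hy; apply: key m0 bBI bAI BA (lp_sup p1 m0 hy).
split => // p p1.
have := part1 p mui p1 (ari_inv hA Wmu).
congr invertible_on; apply: funext => k.
by rewrite /mui mulfV // gt_eqF.
Qed.
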